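(* Let $\mathcal{X}$ be an SP such that either $0$ is an absorbing state for $\mathcal{X}$ or there exists a supermartingale deflator $Y$ for $\mathcal{X}$ with $\{Y=0\}\subseteq\{X=0\}$ for all $X\in\mathcal{X}$, and let $\widetilde{T}$ be the $P$-a.s. unique stopping time such that $X=XI_{\llbracket 0,\widetilde{T}\llbracket}$ $P$-a.s. for all $X\in\mathcal{X}$ and such that there is a sequence $(\hat X^n)_{n\in\mathbb N}\subseteq\mathcal X$ with $\hat{T}^n:=\inf\{t\ge0:\hat{X}^n_t=0\}\nearrow\widetilde{T}$. Let $\tilde{\tau}:\Omega\to(0,\infty]$ be a random time such that for all $0\le s<t\le\infty$ with $P[\tilde{\tau}\in(s,t]]>0$, writing $Q^{(s,t)}:=P[\,\cdot\,|\,\tilde{\tau}\in(s,t]]$, there exists $\hat{X}^{(s,t)}\in\mathcal{X}$ which is strictly positive on $[0,s]$ $Q^{(s,t)}$-a.s., and every $X\in\mathcal{X}$ is zero on $[t,\infty)$ $Q^{(s,t)}$-a.s. Then $\tilde{\tau}=\widetilde{T}$ $P$-a.s.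
   Context: Work on a filtered probability space $(\Omega,\mathcal{F},\mathbb{F},P)$, $\mathbb{F}=(\mathcal{F}_t)_{t\ge0}$ satisfying the usual conditions, $\mathcal{F}_0$ trivial; convention $0/0=1$. $\llbracket 0,\tau\llbracket=\{(\omega,t)\in\Omega\times[0,\infty):0\le t<\tau(\omega)\}$; the interval $(s,\infty]$ includes $\infty$. A set of processes (SP) is a set $\mathcal{X}$ of processes such that: (A) each $X\in\mathcal{X}$ is an adapted, nonnegative, $P$-a.s. right-continuous process on $[0,\infty)$ with $X_0=1$; (C) for $X,X'\in\mathcal{X}$ and $\alpha\in[0,1]$, $(1-\alpha)X+\alpha X'\in\mathcal{X}$; (D) for all $t\in[0,\infty)$, $A\in\mathcal{F}_t$, $X\in\mathcal{X}$ and $X'\in\mathcal{X}$ with $\{X'_t=0\}\subseteq\{X_t=0\}$ on $A$, the process $I_{A^c}X_\cdot + I_A (X_{t\wedge\cdot}/X'_t)X'_{t\vee\cdot}$ belongs to $\mathcal{X}$. $0$ is an absorbing state if $\{X_s=0\}\subseteq\{X_t=0\}$ for every $X\in\mathcal{X}$ and $0\le s<t<\infty$. A supermartingale deflator for $\mathcal{X}$ is a process $Y$ with $XY$ a supermartingale for every $X\in\mathcal{X}$. *)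

(* Defs.v *)
From HB Require Import structures.
From mathcomp Require Import all_boot all_order all_algebra.
From mathcomp Require Import all_classical all_reals all_analysis.
From mathcomp Require Import measurable_realfun.
Set Implicit Arguments. Unset Strict Implicit. Unset Printing Implicit Defensive.
Import Order.TTheory GRing.Theory Num.Theory.
Import numFieldNormedType.Exports.
Local Open Scope classical_set_scope.
Local Open Scope ring_scope.

(* Time is [0, oo), encoded as real numbers t with 0 <= t; values of processes
   at negative times are irrelevant junk.  A process is a map time -> Omega -> R. *)
Definition process (T : Type) (R : realType) := R -> T -> R.

Section Defs.
Context {d : measure_display} {T : measurableType d} {R : realType}.
Variable P : probability T R.
Variable F : R -> set (set T).

Definition Gmeas (G : set (set T)) (f : T -> R) :=
  forall B : set R, measurable B -> G (f @^-1` B).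

Definition usual_filtration :=
  (forall t, 0 <= t -> sigma_algebra setT (F t) /\ F t `<=` measurable) /\
  (forall s t, 0 <= s -> s <= t -> F s `<=` F t) /\
  (forall N : set T, (exists M, measurable M /\ N `<=` M /\ P M = 0%E) -> F 0 N) /\
  (forall t (A : set T), 0 <= t -> (forall u, t < u -> F u A) -> F t A) /\
  (forall A, F 0 A -> P A = 0%E \/ P A = 1%E).

Definition adapted (X : process T R) := forall t, 0 <= t -> Gmeas (F t) (X t).

Definition stopping_time (tau : T -> \bar R) :=
  (forall w, (0 <= tau w)%E) /\
  forall t, 0 <= t -> F t [set w | (tau w <= t%:E)%E].

(* supermartingale w.r.t. (F, P), conditional expectations unfolded:
   E[Z_t 1_A] <= E[Z_s 1_A] for s <= t and A in F_s *)
Definition supermartingale (Z : process T R) :=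
  adapted Z /\
  (forall t, 0 <= t -> P.-integrable setT (fun w => (Z t w)%:E)) /\
  (forall s t (A : set T), 0 <= s -> s <= t -> F s A ->
     (\int[P]_(w in A) (Z t w)%:E <= \int[P]_(w in A) (Z s w)%:E)%E).

Definition ratio (a b : R) : R := if (a == 0) && (b == 0) then 1 else a / b.

(* I_{A^c} X + I_A (X_{t /\ .} / X'_t) X'_{t \/ .}, read as the pasting:
   X up to time t, then (X_t/X'_t) X' afterwards, on A *)
Definition concat (t : R) (A : set T) (X X' : process T R) : process T R :=
  fun u w => if `[< A w >] then
               (if u <= t then X u w else ratio (X t w) (X' t w) * X' u w)
             else X u w.

Definition is_SP (XX : set (process T R)) :=
  (forall X, XX X ->
     adapted X /\ (forall t w, 0 <= t -> 0 <= X t w) /\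
     {ae P, forall w, forall t, 0 <= t -> X^~ w u @[u --> t^'+] --> X t w} /\
     (forall w, X 0 w = 1)) /\
  (forall X X' (a : R), XX X -> XX X' -> 0 <= a <= 1 ->
     XX (fun u w => (1 - a) * X u w + a * X' u w)) /\
  (forall t A X X', 0 <= t -> F t A -> XX X -> XX X' ->
     (forall w, A w -> X' t w = 0 -> X t w = 0) ->
     XX (concat t A X X')).

Definition zero_absorbing (XX : set (process T R)) :=
  forall X, XX X -> forall s t w, 0 <= s -> s < t -> X s w = 0 -> X t w = 0.

Definition supermartingale_deflator (XX : set (process T R)) (Y : process T R) :=
  forall X, XX X -> supermartingale (fun t w => X t w * Y t w).

(* first hitting time of zero, inf of the empty set = +oo *)
Definition hit0 (X : process T R) (w : T) : \bar R :=
  ereal_inf [set t%:E | t in [set t | 0 <= t /\ X t w = 0]].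

Definition condP (E A : set T) : R := fine (P (A `&` E)) / fine (P E).

Definition cond_as (E : set T) (prop : T -> Prop) :=
  exists N, measurable N /\ [set w | ~ prop w] `<=` N /\ condP E N = 0.

End Defs.

(* Main.v *)
Require Import Defs.
From HB Require Import structures.
From mathcomp Require Import all_boot all_order all_algebra.
From mathcomp Require Import all_classical all_reals all_analysis.
From mathcomp Require Import measurable_realfun.
Import Order.TTheory GRing.Theory Num.Theory.
Import numFieldNormedType.Exports.
Local Open Scope classical_set_scope.
Local Open Scope ring_scope.
Lemma aeE (d : measure_display) (T : measurableType d) (R : realType)
  (P : probability T R) (Q : T -> Prop) :
  {ae P, forall w, Q w} <-> P.-negligible [set w | ~ Q w].
Proof. by split. Qed.

Lemma rat_between (R : realType) (a b : \bar R) : (0 <= a)%E -> (a < b)%E ->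
  exists q : rat, (a <= (ratr q)%:E)%E /\ ((ratr q)%:E < b)%E.
Proof.
case: a => [r| |] //= _; case: b => [r'| |] //=.
- rewrite lte_fin => rr'; have [q] := rat_in_itvoo rr'.
  rewrite in_itv /= => /andP[h1 h2]; exists q.
  by rewrite lee_fin lte_fin (ltW h1) h2.
- move=> _; have : r < r + 1 by rewrite ltrDl ltr01.
  move=> /rat_in_itvoo [q]; rewrite in_itv /= => /andP[h1 h2]; exists q.
  by rewrite lee_fin (ltW h1) ltry.
Qed.

Lemma cond_negl (d : measure_display) (T : measurableType d) (R : realType)
  (P : probability T R) (E : set T) (Q : T -> Prop) :
  measurable E -> ((0 < P E)%E -> cond_as P E Q) ->
  P.-negligible (E `&` [set w | ~ Q w]).
Proof.
move=> mE H.
have [PE0|PEpos] : P E = 0%E \/ (0 < P E)%E.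
  by have := measure_ge0 P E; rewrite le_eqVlt => /orP[/eqP<-|]; [left|right].
  by exists E; split => // w [].
have [N [mN [sN cN]]] := H PEpos.
exists (N `&` E); split.
- exact: measurableI.
- move: cN; rewrite /condP.
  have fE : P E \is a fin_num by apply: fin_num_measure.
  have fNE : P (N `&` E) \is a fin_num by apply: fin_num_measure; exact: measurableI.
  have hE : fine (P E) != 0.
    by rewrite -(@eqe _ (fine (P E))) fineK // gt_eqF.
  move=> /eqP; rewrite mulf_eq0 invr_eq0 (negbTE hE) orbF => /eqP h.
  by rewrite -(fineK fNE) h.
- by move=> w [Ew nQ]; split => //; exact: sN.
Qed.

Lemma hit0_pos (d : measure_display) (T : measurableType d) (R : realType)
  (X : process T R) w (t : R) : 0 <= t -> (t%:E < hit0 X w)%E -> X t w != 0.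
Proof.
move=> t0 ht; apply/eqP => Xt.
have : (hit0 X w <= t%:E)%E by apply: ereal_inf_lbound; exists t.
by rewrite leNgt ht.
Qed.

Lemma meas_E (d : measure_display) (T : measurableType d) (R : realType)
  (tau : T -> \bar R) (s : R) (t : \bar R) : measurable_fun [set: T] tau ->
  measurable [set w | (s%:E < tau w)%E /\ (tau w <= t)%E].
Proof.
move=> mtau.
have := mtau measurableT _ (emeasurable_itv `]s%:E, t]); rewrite setTI.
congr measurable; apply/seteqP; split => w /=; rewrite in_itv /=.
  by move=> /andP[-> ->].
by move=> [h1 h2]; apply/andP.
Qed.

Lemma ev_gt (R : realType) (f : nat -> \bar R) (l x : \bar R) :
  f @ \oo --> l -> (x < l)%E -> exists n, (x < f n)%E.
Proof.
move=> fl xl.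
have : nbhs l [set y | (x < y)%E].
  by apply: open_nbhs_nbhs; split => //; exact: open_ereal_gt_ereal.
move=> /fl H; near \oo => n; exists n; near: n; exact: H.
Unshelve. all: end_near.
Qed.
Arguments rat_between {R a b}.
Arguments cond_negl {d T R P E Q}.
Arguments hit0_pos {d T R X w t}.
Arguments meas_E {d T R tau s t}.
Arguments ev_gt {R f l x}.
Theorem propositionA9 (d : measure_display) (T : measurableType d) (R : realType)
  (P : probability T R) (F : R -> set (set T))
  (XX : set (process T R)) (Ttil : T -> \bar R) (tau : T -> \bar R) :
  usual_filtration P F ->
  is_SP P F XX ->
  (zero_absorbing XX \/
   exists Y : process T R, supermartingale_deflator P F XX Y /\
     forall X, XX X -> forall t w, 0 <= t -> Y t w = 0 -> X t w = 0) ->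
  stopping_time F Ttil ->
  (forall X, XX X ->
     {ae P, forall w, forall t, 0 <= t -> X t w = X t w * (if (t%:E < Ttil w)%E then 1 else 0)}) ->
  (exists Xh : nat -> process T R, (forall n, XX (Xh n)) /\
     {ae P, forall w, {homo (fun n => hit0 (Xh n) w) : n m / (n <= m)%N >-> (n <= m)%E} /\
        (fun n => hit0 (Xh n) w) @ \oo --> Ttil w}) ->
  measurable_fun [set: T] tau ->
  (forall w, (0 < tau w)%E) ->
  (forall (s : R) (t : \bar R), 0 <= s -> (s%:E < t)%E ->
     let E := [set w | (s%:E < tau w)%E /\ (tau w <= t)%E] in
     (0 < P E)%E ->
     (exists Xh, XX Xh /\ cond_as P E (fun w => forall u, 0 <= u <= s -> 0 < Xh u w)) /\
     (forall X, XX X -> cond_as P E (fun w => forall u : R, (t <= u%:E)%E -> X u w = 0))) ->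
  {ae P, forall w, tau w = Ttil w}.
Proof.
move=> _ _ _ [Tge0 _] Hzero [Xh [XhXX Hae]] mtau taupos Hyp.
apply/aeE.
pose S1 (qm : rat * nat) := [set w | 0 < (ratr qm.1 : R) /\
   (tau w <= (ratr qm.1)%:E)%E /\ Xh qm.2 (ratr qm.1) w != 0].
pose S2 (q : rat) := [set w | 0 <= (ratr q : R) /\
   ((ratr q)%:E < tau w)%E /\ (Ttil w <= (ratr q)%:E)%E].
have N1 : forall qm, P.-negligible (S1 qm).
  move=> [q m] /=; have [q0|q0] := ltP 0 (ratr q : R); last first.
    by apply: (negligibleS _ (negligible_set0 P)) => w /= [h]; have := lt_le_trans h q0; rewrite ltxx.
  set E := [set w | (0%:E < tau w)%E /\ (tau w <= (ratr q)%:E)%E].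
  have := @cond_negl _ _ _ P E (fun w => forall u : R, ((ratr q)%:E <= u%:E)%E -> Xh m u w = 0) (meas_E mtau).
  move=> /(_ (fun h => (Hyp 0 (ratr q)%:E (lexx 0) q0 h).2 _ (XhXX m))) HN.
  apply: (negligibleS _ HN) => w /= [_ [tw Xw]]; split; first by split.
  by move=> /(_ (ratr q) (lexx _)) /eqP; rewrite (negbTE Xw).
have N2 : forall q, P.-negligible (S2 q).
  move=> q; have [q0|q0] := leP 0 (ratr q : R); last first.
    by apply: (negligibleS _ (negligible_set0 P)) => w /= [h]; have := le_lt_trans h q0; rewrite ltxx.
  set E := [set w | ((ratr q)%:E < tau w)%E /\ (tau w <= +oo)%E].
  have mE : measurable E by exact: meas_E.
  have [PE0|PEpos] : P E = 0%E \/ (0 < P E)%E.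
    by have := measure_ge0 P E; rewrite le_eqVlt => /orP[/eqP<-|h]; [left|right].
    apply: (negligibleS _ (proj2 (negligibleP _ mE) PE0)).
    by move=> w /= [_ [h _]]; split => //; rewrite leey.
  have [[X [XXX HX]] _] := Hyp (ratr q) +oo%E q0 (ltry _) PEpos.
  have HN := cond_negl mE (fun _ => HX).
  apply: (negligibleS _ (negligibleU HN (Hzero X XXX))) => w /= [_ [qt Tq]].
  have [bad|good] := pselect (forall t, 0 <= t -> X t w = X t w * (if (t%:E < Ttil w)%E then 1 else 0)).
    left; split; first by split => //; rewrite leey.
    move=> /(_ (ratr q)); rewrite lexx q0 => /(_ isT).
    have Tf : ((ratr q)%:E < Ttil w)%E = false by rewrite ltNge Tq.
    by rewrite (bad _ q0) Tf mulr0 ltxx.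
  by right.
pose G n := if @unpickle (rat * nat)%type n is Some qm then S1 qm else set0.
pose H n := if @unpickle rat n is Some q then S2 q else set0.
have NG : P.-negligible (\bigcup_n G n).
  by apply: negligible_bigcup => n; rewrite /G; case: unpickle => // *; exact: negligible_set0.
have NH : P.-negligible (\bigcup_n H n).
  by apply: negligible_bigcup => n; rewrite /H; case: unpickle => // *; exact: negligible_set0.
have NA := negligibleU (negligibleU NG Hae) NH.
apply: (negligibleS _ NA) => w Hw.
have : tau w != Ttil w by apply/eqP.
rewrite neq_lt => /orP[lt|gt].
- left.
  have [good|bad] := pselect ({homo (fun n => hit0 (Xh n) w) : n m / (n <= m)%N >-> (n <= m)%E} /\
        (fun n => hit0 (Xh n) w) @ \oo --> Ttil w); last by right.
  left.
  have [q [tq qT]] := rat_between (ltW (taupos w)) lt.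
  have [n hn] := ev_gt good.2 qT.
  have q0 : 0 < ratr q :> R by rewrite -lte_fin (lt_le_trans (taupos w) tq).
  exists (pickle (q, n)); first exact: I.
  rewrite /G pickleK; split; first exact: q0.
  split; first exact: tq.
  exact: hit0_pos (ltW q0) hn.
- right.
  have [q [tq qT]] := rat_between (Tge0 w) gt.
  exists (pickle q); first exact: I.
  rewrite /H pickleK; split; last by split.
  by rewrite -lee_fin (le_trans (Tge0 w) tq).
Qed.
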